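(* Let $X$ be a connected topological space and let $E$ be a $B_1$-retract of $X$. Then $E$ (with the subspace topology) is connected.
   Context: A function $f:X\to Y$ between topological spaces is a Baire-one function if it is the pointwise limit of a sequence of continuous functions $f_n:X\to Y$. A subset $E$ of $X$ (with the subspace topology) is a $B_1$-retract of $X$ if there exists a Baire-one function $r:X\to E$ with $r(x)=x$ for all $x\in E$. *)

(* Defs.v *)
From Stdlib Require Import Arith.

Record TopSpace := {
  carrier :> Type;
  is_open : (carrier -> Prop) -> Prop;
  open_full : is_open (fun _ => True);
  open_inter : forall U V, is_open U -> is_open V -> is_open (fun x => U x /\ V x);
  open_union : forall F : (carrier -> Prop) -> Prop,
      (forall U, F U -> is_open U) -> is_open (fun x => exists U, F U /\ U x)
}.

Definition sub_open (X : TopSpace) (E : X -> Prop) (V : {x : X | E x} -> Prop) : Prop :=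
  exists U : X -> Prop, is_open X U /\ forall y, V y <-> U (proj1_sig y).

Lemma sub_open_full (X : TopSpace) (E : X -> Prop) : sub_open X E (fun _ => True).
Proof. exists (fun _ => True); split; [apply open_full | tauto]. Qed.

Lemma sub_open_inter (X : TopSpace) (E : X -> Prop) U V :
  sub_open X E U -> sub_open X E V -> sub_open X E (fun x => U x /\ V x).
Proof.
  intros [U' [HU HU']] [V' [HV HV']].
  exists (fun x => U' x /\ V' x); split; [apply open_inter; auto|].
  intro y; rewrite HU', HV'; tauto.
Qed.

Lemma sub_open_union (X : TopSpace) (E : X -> Prop) (F : ({x : X | E x} -> Prop) -> Prop) :
  (forall U, F U -> sub_open X E U) -> sub_open X E (fun x => exists U, F U /\ U x).
Proof.
  intros HF.
  exists (fun x => exists U, (is_open X U /\ exists V, F V /\ forall y, V y <-> U (proj1_sig y)) /\ U x).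
  split.
  - apply open_union. intros U [H _]; exact H.
  - intro y; split.
    + intros [V [FV Vy]]. destruct (HF V FV) as [U [HU HUV]].
      exists U; split; [split; [exact HU| exists V; split; auto] | apply HUV; exact Vy].
    + intros [U [[HU [V [FV HUV]]] Uy]]. exists V; split; auto. apply HUV; exact Uy.
Qed.

Definition subspace (X : TopSpace) (E : X -> Prop) : TopSpace :=
  {| carrier := {x : X | E x};
     is_open := sub_open X E;
     open_full := sub_open_full X E;
     open_inter := sub_open_inter X E;
     open_union := sub_open_union X E |}.

Definition continuous (X Y : TopSpace) (f : X -> Y) : Prop :=
  forall V : Y -> Prop, is_open Y V -> is_open X (fun x => V (f x)).

Definition seq_converges (Y : TopSpace) (s : nat -> Y) (l : Y) : Prop :=
  forall V : Y -> Prop, is_open Y V -> V l -> exists N, forall n, N <= n -> V (s n).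

Definition baire_one (X Y : TopSpace) (f : X -> Y) : Prop :=
  exists fn : nat -> X -> Y,
    (forall n, continuous X Y (fn n)) /\
    (forall x, seq_converges Y (fun n => fn n x) (f x)).

Definition B1_retract (X : TopSpace) (E : X -> Prop) : Prop :=
  exists r : X -> subspace X E,
    baire_one X (subspace X E) r /\
    (forall x (hx : E x), proj1_sig (r x) = x).

Definition connected (X : TopSpace) : Prop :=
  forall U : X -> Prop, is_open X U -> is_open X (fun x => ~ U x) ->
    (forall x, ~ U x) \/ (forall x, U x).

(* Main.v *)
Require Import Defs.
From Stdlib Require Import Classical Arith Lia.

Theorem proposition2p4 (X : TopSpace) (E : X -> Prop) :
  connected X -> B1_retract X E -> connected (subspace X E).
Proof.
  intros HX [r [[fn [Hc Hl]] Hr]] U HU HUc.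
  destruct (classic (exists a, U a)) as [[a Ua]|Hn]; [|left; intros x Ux; apply Hn; eauto].
  destruct (classic (exists b, ~ U b)) as [[b Ub]|Hn]; [|right; intros x; apply NNPP; intros H; apply Hn; eauto].
  exfalso.
  destruct a as [xa Ea]. destruct b as [xb Eb].
  pose proof HU as [U' [HU' HUU']]. pose proof HUc as [V' [HV' HVV']].
  destruct (Hl xa U HU) as [N1 H1].
  { apply (proj2 (HUU' _)). rewrite (Hr xa Ea). exact (proj1 (HUU' _) Ua). }
  destruct (Hl xb (fun x => ~ U x) HUc) as [N2 H2].
  { apply (proj2 (HVV' _)). rewrite (Hr xb Eb). exact (proj1 (HVV' _) Ub). }
  specialize (H1 (N1 + N2) ltac:(lia)). specialize (H2 (N1 + N2) ltac:(lia)).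
  destruct (HX (fun x => U (fn (N1 + N2) x)) (Hc _ U HU) (Hc _ _ HUc)) as [H|H].
  - exact (H _ H1).
  - exact (H2 (H _)).
Qed.
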